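(* Let $n\in\mathbb{N}$, $H\in\mathbb{R}^{n\times n}$, $W\succ 0$ in $\mathbb{R}^{n\times n}$, and $C=\mathrm{diag}(C_{11},\dots,C_{nn})$ diagonal with all $C_{ii}\ne 0$; assume $(H,C)$ observable and $(H,D)$ controllable where $W=DD^T$. Let $\Delta>0$ (the $\ell_2$-sensitivity $\Delta_{\ell_2}y$), let $\delta\in[10^{-5},10^{-1}]$, let $\epsilon>0$, and set $$\sigma=\frac{\Delta}{2\epsilon}\Big(K_\delta+\sqrt{K_\delta^2+2\epsilon}\Big),\qquad K_\delta:=\mathcal Q^{-1}(\delta),$$ and $V=\sigma^2 I_n$. Let $\Sigma$ be the unique positive semidefinite solution of $\Sigma = H\Sigma H^T - H\Sigma C^T(C\Sigma C^T+V)^{-1}C\Sigma H^T + W$. Let $B_l,B_u$ satisfy $\mathrm{tr}\,W<B_l<\mathrm{tr}\,W+\mathrm{tr}(H^TH)\lambda_n(W)$ and $B_u>\mathrm{tr}\,W$, and define $$\eta_1:=\left(\frac{(B_l-\mathrm{tr}\,W)\,\lambda_n(W)\,C_u^2}{\Delta^2\big(\mathrm{tr}(H^TH)\lambda_n(W)-B_l+\mathrm{tr}\,W\big)}\right)^{1/2},\qquad \eta_3:=\left(\frac{(B_u-\mathrm{tr}\,W)\,C_l^2}{\Delta^2\,\mathrm{tr}(H^TH)}\right)^{1/2}.$$ If $$\frac18\left(\frac{1+\sqrt{36\eta_3+1}}{\eta_3}\right)^2\le\epsilon,$$ then $\mathrm{tr}\,\Sigma\le B_u$; and if $\epsilon\le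 1/\eta_1$, then $\mathrm{tr}\,\Sigma\ge B_l$. In particular, if both inequalities on $\epsilon$ hold, then $B_l\le\mathrm{tr}\,\Sigma\le B_u$.
   Context: $\mathcal Q(y)=\frac{1}{\sqrt{2\pi}}\int_y^\infty e^{-z^2/2}\,dz$ is the Gaussian tail function and $\mathcal Q^{-1}$ its inverse. The noise level $\sigma$ is the Gaussian-mechanism noise giving $(\epsilon,\delta)$-differential privacy of the state trajectory when $\Delta$ is the sensitivity $\Delta_{\ell_2}y=\sup\{\|Cx-Cx'\|_{\ell_2}:\|x-x'\|_{\ell_2}\le B\}$; for the claim, $\Delta$ may be any positive constant. $\mathrm{tr}\,\Sigma$ is the steady-state mean squared a priori (prediction) error of the Kalman filter. $\lambda_n(W)$ is the smallest eigenvalue of $W$. $C_l:=C_{ll}$ with $l=\arg\min_i C_{ii}^2$ and $C_u:=C_{uu}$ with $u=\arg\max_i C_{ii}^2$. *)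

(* Defs.v *)
From Stdlib Require Import Reals Lra.
Open Scope R_scope.

(* Real matrices are functions nat -> nat -> R; only entries with indices
   below the relevant dimensions matter.  Vectors are nat -> R. *)
Definition mat := nat -> nat -> R.
Definition vec := nat -> R.

Fixpoint rsum (n : nat) (f : nat -> R) : R :=
  match n with O => 0 | S k => rsum k f + f k end.

Definition mmul (k : nat) (A B : mat) : mat :=
  fun i j => rsum k (fun l => A i l * B l j).
Definition madd (A B : mat) : mat := fun i j => A i j + B i j.
Definition msub (A B : mat) : mat := fun i j => A i j - B i j.
Definition mtr (A : mat) : mat := fun i j => A j i.
Definition mscal (c : R) (A : mat) : mat := fun i j => c * A i j.
Definition mid : mat := fun i j => if Nat.eqb i j then 1 else 0.
Definition mvec (k : nat) (A : mat) (x : vec) : vec :=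
  fun i => rsum k (fun l => A i l * x l).
Fixpoint mpow (n : nat) (A : mat) (p : nat) : mat :=
  match p with O => mid | S q => mmul n A (mpow n A q) end.

Definition meq (a b : nat) (A B : mat) : Prop :=
  forall i j, (i < a)%nat -> (j < b)%nat -> A i j = B i j.

Definition trace (n : nat) (A : mat) : R := rsum n (fun i => A i i).

Definition symmetric (n : nat) (A : mat) : Prop := meq n n A (mtr A).
Definition quad (n : nat) (A : mat) (x : vec) : R :=
  rsum n (fun i => x i * mvec n A x i).
Definition nonzero_vec (n : nat) (x : vec) : Prop := exists i, (i < n)%nat /\ x i <> 0.

Definition posdef (n : nat) (A : mat) : Prop :=
  symmetric n A /\ forall x, nonzero_vec n x -> quad n A x > 0.
Definition possemidef (n : nat) (A : mat) : Prop :=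
  symmetric n A /\ forall x, quad n A x >= 0.

Definition diag_nonsingular (n : nat) (C : mat) : Prop :=
  (forall i j, (i < n)%nat -> (j < n)%nat -> i <> j -> C i j = 0) /\
  (forall i, (i < n)%nat -> C i i <> 0).

Definition is_eigenvalue (n : nat) (A : mat) (lam : R) : Prop :=
  exists x, nonzero_vec n x /\ forall i, (i < n)%nat -> mvec n A x i = lam * x i.
Definition is_min_eigenvalue (n : nat) (A : mat) (lam : R) : Prop :=
  is_eigenvalue n A lam /\ forall mu, is_eigenvalue n A mu -> lam <= mu.

(* (H, C) observable, H : n x n, C : p x n:  the observability matrix
   [C; CH; ...; CH^(n-1)] has rank n, i.e. trivial kernel *)
Definition observable (n p : nat) (H C : mat) : Prop :=
  forall x : vec,
    (forall k i, (k < n)%nat -> (i < p)%nat -> mvec n (mmul n C (mpow n H k)) x i = 0) ->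
    forall i, (i < n)%nat -> x i = 0.

(* (H, D) controllable, H : n x n, D : n x m: the controllability matrix
   [D, HD, ..., H^(n-1) D] has rank n, i.e. no nonzero left annihilator *)
Definition controllable (n m : nat) (H D : mat) : Prop :=
  forall y : vec,
    (forall k j, (k < n)%nat -> (j < m)%nat ->
       rsum n (fun i => y i * mmul n (mpow n H k) D i j) = 0) ->
    forall i, (i < n)%nat -> y i = 0.

Definition riccati (n : nat) (H C V W S : mat) : Prop :=
  let M := madd (mmul n (mmul n C S) (mtr C)) V in
  exists Minv : mat,
    meq n n (mmul n M Minv) mid /\ meq n n (mmul n Minv M) mid /\
    meq n n S
      (madd (msub (mmul n (mmul n H S) (mtr H))
                  (mmul n (mmul n (mmul n (mmul n (mmul n H S) (mtr C)) Minv) (mmul n C S)) (mtr H)))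
            W).

(* Gaussian tail: gauss_tail y q  <->  Q(y) = q, where
   Q(y) = 1/sqrt(2 pi) * int_y^infty exp(-z^2/2) dz  (improper Riemann integral) *)
Definition gauss_tail (y q : R) : Prop :=
  forall eps, eps > 0 -> exists T0, forall T, T0 <= T -> y <= T ->
    exists pr : Riemann_integrable (fun z => exp (- (z ^ 2) / 2)) y T,
      Rabs (RiemannInt pr / sqrt (2 * PI) - q) < eps.

(* Main.v *)
Require Import Defs.
From Stdlib Require Import Reals.
From Stdlib Require Import Lra Lia Classical.
Open Scope R_scope.

Lemma rsum_ext n f g : (forall i, (i < n)%nat -> f i = g i) -> rsum n f = rsum n g.
Proof. induction n; simpl; intros; auto. rewrite IHn by (intros; apply H; lia). rewrite H by lia. auto. Qed.

Lemma rsum_plus n f g : rsum n (fun i => f i + g i) = rsum n f + rsum n g.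
Proof. induction n; simpl; [lra|]. rewrite IHn; lra. Qed.

Lemma rsum_minus n f g : rsum n (fun i => f i - g i) = rsum n f - rsum n g.
Proof. induction n; simpl; [lra|]. rewrite IHn; lra. Qed.

Lemma rsum_scal n c f : rsum n (fun i => c * f i) = c * rsum n f.
Proof. induction n; simpl; [lra|]. rewrite IHn; lra. Qed.

Lemma rsum_scalr n c f : rsum n (fun i => f i * c) = rsum n f * c.
Proof. induction n; simpl; [lra|]. rewrite IHn; lra. Qed.

Lemma rsum_zero n : rsum n (fun _ => 0) = 0.
Proof. induction n; simpl; [lra|]. rewrite IHn; lra. Qed.

Lemma rsum_le n f g : (forall i, (i < n)%nat -> f i <= g i) -> rsum n f <= rsum n g.
Proof. induction n; simpl; intros; [lra|]. assert (f n <= g n) by (apply H; lia).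
 assert (rsum n f <= rsum n g) by (apply IHn; intros; apply H; lia). lra. Qed.

Lemma rsum_nonneg n f : (forall i, (i < n)%nat -> 0 <= f i) -> 0 <= rsum n f.
Proof. intros. rewrite <- (rsum_zero n). apply rsum_le; auto. Qed.

Lemma rsum_swap n m (f : nat -> nat -> R) :
  rsum n (fun i => rsum m (fun j => f i j)) = rsum m (fun j => rsum n (fun i => f i j)).
Proof. induction n; simpl. { symmetry; apply rsum_zero. }
 rewrite IHn. rewrite <- rsum_plus. auto. Qed.

Lemma rsum_delta n k (a : nat -> R) : (k < n)%nat ->
  rsum n (fun i => if Nat.eqb i k then a i else 0) = a k.
Proof. induction n; intros; [lia|]. simpl. destruct (Nat.eqb n k) eqn:E.
 - apply Nat.eqb_eq in E; subst. rewrite (rsum_ext _ _ (fun _ => 0)). rewrite rsum_zero; lra.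
   intros. destruct (Nat.eqb i k) eqn:E2; auto. apply Nat.eqb_eq in E2; lia.
 - apply Nat.eqb_neq in E. rewrite IHn by lia. lra. Qed.

Lemma rsum_delta' n k (a : nat -> R) : (k < n)%nat ->
  rsum n (fun i => if Nat.eqb k i then a i else 0) = a k.
Proof. intros. rewrite <- (rsum_delta n k a) by auto. apply rsum_ext; intros.
 rewrite Nat.eqb_sym; auto. Qed.

Definition dot n (x y : vec) := rsum n (fun i => x i * y i).

Lemma dot_sym n x y : dot n x y = dot n y x.
Proof. unfold dot; apply rsum_ext; intros; lra. Qed.

Lemma nrm_nonneg n x : 0 <= dot n x x.
Proof. unfold dot; apply rsum_nonneg; intros; nra. Qed.

Lemma mvec_mmul n A B x i : mvec n (mmul n A B) x i = mvec n A (mvec n B x) i.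
Proof. unfold mvec, mmul.
 transitivity (rsum n (fun l => rsum n (fun k => A i k * B k l * x l))).
 - apply rsum_ext; intros. rewrite <- rsum_scalr. auto.
 - rewrite rsum_swap. apply rsum_ext; intros. rewrite <- rsum_scal. apply rsum_ext; intros; lra.
Qed.

Lemma dot_mvec n x A y : dot n x (mvec n A y) = dot n (mvec n (mtr A) x) y.
Proof. unfold dot, mvec, mtr.
 transitivity (rsum n (fun i => rsum n (fun l => x i * A i l * y l))).
 - apply rsum_ext; intros. rewrite <- rsum_scal. apply rsum_ext; intros; lra.
 - rewrite rsum_swap. apply rsum_ext; intros. rewrite <- rsum_scalr. apply rsum_ext; intros; lra.
Qed.

Lemma mvec_ext n A B x y i : meq n n A B -> (forall j, (j < n)%nat -> x j = y j) -> (i < n)%nat ->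
  mvec n A x i = mvec n B y i.
Proof. intros. unfold mvec. apply rsum_ext; intros. rewrite H, H0 by auto. auto. Qed.

Lemma dot_ext n x y x' y' : (forall j, (j < n)%nat -> x j = x' j) ->
  (forall j, (j < n)%nat -> y j = y' j) -> dot n x y = dot n x' y'.
Proof. intros; unfold dot; apply rsum_ext; intros; rewrite H, H0; auto. Qed.

Lemma quad_dot n A x : quad n A x = dot n x (mvec n A x).
Proof. reflexivity. Qed.

Lemma mvec_mid n x i : (i < n)%nat -> mvec n mid x i = x i.
Proof. intros. unfold mvec, mid. rewrite <- (rsum_delta' n i x) by auto.
 apply rsum_ext; intros. destruct (Nat.eqb i i0); lra. Qed.

Lemma trace_quad n A : trace n A = rsum n (fun k => quad n A (fun i => if Nat.eqb i k then 1 else 0)).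
Proof. unfold trace. apply rsum_ext; intros k Hk. unfold quad, mvec.
 rewrite <- (rsum_delta n k (fun i => A i k)) by auto. apply rsum_ext; intros.
 destruct (Nat.eqb i k) eqn:E.
 - apply Nat.eqb_eq in E; subst.
   rewrite (rsum_ext n _ (fun l => if Nat.eqb l k then A k l else 0)).
   + rewrite rsum_delta by auto. lra.
   + intros. destruct (Nat.eqb i k); lra.
 - lra.
Qed.

Lemma quad_madd n A B x : quad n (madd A B) x = quad n A x + quad n B x.
Proof. unfold quad, mvec, madd. rewrite <- rsum_plus. apply rsum_ext; intros.
 rewrite <- Rmult_plus_distr_l, <- rsum_plus. f_equal. apply rsum_ext; intros; lra. Qed.

Lemma quad_msub n A B x : quad n (msub A B) x = quad n A x - quad n B x.
Proof. unfold quad, mvec, msub. rewrite <- rsum_minus. apply rsum_ext; intros.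
 rewrite <- Rmult_minus_distr_l, <- rsum_minus. apply f_equal. apply rsum_ext; intros; lra. Qed.

Lemma quad_ext n A B x : meq n n A B -> quad n A x = quad n B x.
Proof. intros. unfold quad. apply rsum_ext; intros. f_equal. apply mvec_ext; auto. Qed.

Lemma mvec_sym n S v i : symmetric n S -> (i < n)%nat -> mvec n (mtr S) v i = mvec n S v i.
Proof. intros Hs Hi. unfold mvec. apply rsum_ext; intros. unfold mtr. rewrite (Hs i i0) by auto. reflexivity. Qed.

Lemma quad_HSH n H S x : quad n (mmul n (mmul n H S) (mtr H)) x = quad n S (mvec n (mtr H) x).
Proof. rewrite quad_dot.
 rewrite (dot_ext n x _ x (mvec n H (mvec n S (mvec n (mtr H) x)))); auto.
 - rewrite dot_mvec. reflexivity.
 - intros. rewrite !mvec_mmul. reflexivity.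
Qed.

Lemma quad_big n H C S Minv x : symmetric n S ->
  quad n (mmul n (mmul n (mmul n (mmul n (mmul n H S) (mtr C)) Minv) (mmul n C S)) (mtr H)) x
  = dot n (mvec n C (mvec n S (mvec n (mtr H) x)))
          (mvec n Minv (mvec n C (mvec n S (mvec n (mtr H) x)))).
Proof. intros Hs. set (v := mvec n (mtr H) x). set (g := mvec n C (mvec n S v)).
 rewrite quad_dot.
 rewrite (dot_ext n x _ x (mvec n H (mvec n S (mvec n (mtr C) (mvec n Minv g))))); auto.
 - rewrite dot_mvec. fold v. rewrite dot_mvec. rewrite dot_mvec.
   apply dot_ext; auto. intros. change (mvec n C (mvec n (mtr S) v) j = g j).
   unfold g. apply mvec_ext; auto. red; auto. intros. apply mvec_sym; auto.
 - intros j Hj. rewrite !mvec_mmul. apply mvec_ext; auto. red; auto. intros k Hk.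
   apply mvec_ext; auto. red; auto. intros k2 Hk2. apply mvec_ext; auto. red; auto.
   intros k3 Hk3. apply mvec_ext; auto. red; auto. intros k4 Hk4. unfold g. rewrite mvec_mmul. reflexivity.
Qed.

Lemma mvec_minus n A f h i : mvec n A (fun j => f j - h j) i = mvec n A f i - mvec n A h i.
Proof. unfold mvec. rewrite <- rsum_minus. apply rsum_ext; intros; lra. Qed.

Lemma mvec_diag n C x i : diag_nonsingular n C -> (i < n)%nat -> mvec n C x i = C i i * x i.
Proof. intros [Hd _] Hi. unfold mvec.
 rewrite (rsum_ext n _ (fun j => if Nat.eqb j i then C i j * x j else 0)).
 - rewrite rsum_delta; auto.
 - intros j Hj. destruct (Nat.eqb j i) eqn:E; auto. apply Nat.eqb_neq in E.
   rewrite Hd by auto. lra. Qed.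

Lemma mvec_diagT n C x i : diag_nonsingular n C -> (i < n)%nat -> mvec n (mtr C) x i = C i i * x i.
Proof. intros [Hd Hn] Hi. unfold mvec, mtr.
 rewrite (rsum_ext n _ (fun j => if Nat.eqb j i then C j i * x j else 0)).
 - rewrite rsum_delta; auto.
 - intros j Hj. destruct (Nat.eqb j i) eqn:E; auto. apply Nat.eqb_neq in E.
   rewrite Hd by auto. lra. Qed.

Lemma mvec_scalmid n c x i : (i < n)%nat -> mvec n (mscal c mid) x i = c * x i.
Proof. intros. unfold mvec, mscal. rewrite <- (mvec_mid n x i) by auto. unfold mvec.
 rewrite <- rsum_scal. apply rsum_ext; intros; lra. Qed.

Lemma mvec_madd n A B x i : mvec n (madd A B) x i = mvec n A x i + mvec n B x i.
Proof. unfold mvec, madd. rewrite <- rsum_plus. apply rsum_ext; intros; lra. Qed.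

Lemma Qbound n S C Minv sig lam v :
  symmetric n S -> diag_nonsingular n C -> sig > 0 -> lam >= 0 ->
  (forall x, quad n S x >= lam * dot n x x) ->
  meq n n (mmul n (madd (mmul n (mmul n C S) (mtr C)) (mscal (sig^2) mid)) Minv) mid ->
  let g := mvec n C (mvec n S v) in
  let Q := quad n S v - dot n g (mvec n Minv g) in
  rsum n (fun i => sig^2 * lam * (v i)^2 / (sig^2 + lam * (C i i)^2)) <= Q /\
  Q <= sig^2 * rsum n (fun i => (v i)^2 / (C i i)^2).
Proof.
 intros HS HC Hsig Hlam HSl HM g Q.
 assert (Hc : forall i, (i < n)%nat -> C i i <> 0) by (apply HC).
 set (c := fun i => C i i).
 set (w := mvec n Minv g).
 set (u := fun i => v i / c i).
 set (z := fun i => u i - w i).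
 set (Cz := fun i => c i * z i).
 set (p := mvec n S Cz).
 set (y := mvec n S v).
 set (M := madd (mmul n (mmul n C S) (mtr C)) (mscal (sig^2) mid)).
 assert (E0 : forall i, (i < n)%nat -> mvec n M w i = g i).
 { intros i Hi. unfold w. rewrite <- mvec_mmul. rewrite (mvec_ext n _ mid g g i); auto.
   apply mvec_mid; auto. }
 assert (E1 : forall i, (i < n)%nat -> c i * mvec n S (fun j => c j * w j) i + sig^2 * w i = c i * y i).
 { intros i Hi. assert (Eg : g i = c i * y i) by (unfold g; apply mvec_diag; auto).
   rewrite <- Eg, <- (E0 i Hi). unfold M. rewrite mvec_madd, mvec_scalmid by auto.
   rewrite mvec_mmul, mvec_mmul. rewrite (mvec_diag n C) by auto. fold c.
   f_equal. f_equal. apply mvec_ext; auto. red; auto. intros. symmetry; apply mvec_diagT; auto. }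
 assert (ECz : forall i, (i < n)%nat -> Cz i = v i - c i * w i).
 { intros i Hi. unfold Cz, z, u. specialize (Hc i Hi). fold c in Hc. field; auto. }
 assert (E2 : forall i, (i < n)%nat -> c i * p i = sig^2 * w i).
 { intros i Hi. unfold p. rewrite (mvec_ext n S S Cz (fun j => v j - c j * w j)); auto.
   2: red; auto. rewrite mvec_minus. fold y. specialize (E1 i Hi). lra. }
 assert (HQ : Q = sig^2 * dot n u w).
 { unfold Q. rewrite quad_dot. fold y.
   transitivity (dot n y Cz).
   { unfold dot. rewrite <- rsum_minus. apply rsum_ext; intros i Hi.
     unfold g. rewrite mvec_diag by auto. fold y c. rewrite ECz by auto. unfold c, w, g, y; cbv beta; lra. }
   rewrite dot_sym. unfold y. rewrite dot_mvec.
   unfold dot, Rminus. rewrite <- rsum_scal. apply rsum_ext; intros i Hi.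
   rewrite mvec_sym by auto. fold p. specialize (E2 i Hi). specialize (Hc i Hi). fold c in Hc.
   unfold u. replace (sig^2*(v i / c i * w i)) with (v i / c i * (sig^2 * w i)) by ring.
   rewrite <- E2. field. auto. }
 assert (HR : quad n S Cz + sig^2 * dot n z z = sig^2 * dot n z u).
 { rewrite quad_dot. fold p. unfold dot. rewrite <- rsum_scal, <- rsum_scal, <- rsum_plus.
   apply rsum_ext; intros i Hi. unfold Cz. specialize (E2 i Hi).
   replace (c i * z i * p i) with (z i * (c i * p i)) by ring. rewrite E2. unfold z. ring. }
 assert (HRl : quad n S Cz >= lam * rsum n (fun i => (c i)^2 * (z i)^2)).
 { replace (rsum n (fun i => c i ^ 2 * z i ^ 2)) with (dot n Cz Cz). apply HSl.
   unfold dot; apply rsum_ext; intros; unfold Cz; lra. }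
 assert (HQu : Q = sig^2 * rsum n (fun i => (u i)^2) - sig^2 * dot n z u).
 { rewrite HQ. unfold dot. rewrite <- !rsum_scal, <- rsum_minus. apply rsum_ext; intros.
   unfold z. lra. }
 split.
 -
   set (d := fun i => sig^2 + lam * (c i)^2).
   assert (Hd : forall i, d i > 0) by (intro; unfold d; nra).
   assert (Hup : sig^2 * dot n z u <= rsum n (fun i => sig^4 * (u i)^2 / d i)).
   { assert (sig^2 * dot n z u >= rsum n (fun i => d i * (z i)^2)).
     { rewrite <- HR. unfold d. replace (rsum n (fun i => (sig ^ 2 + lam * c i ^ 2) * z i ^ 2))
        with (lam * rsum n (fun i => (c i)^2 * (z i)^2) + sig^2 * dot n z z). lra.
       unfold dot. rewrite <- !rsum_scal, <- rsum_plus. apply rsum_ext; intros; lra. }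
     assert (rsum n (fun i => 2 * sig^2 * z i * u i - d i * (z i)^2) <=
             rsum n (fun i => sig^4 * (u i)^2 / d i)).
     { apply rsum_le; intros i Hi. specialize (Hd i).
       assert (sig^4 * u i^2 / d i - (2*sig^2*z i*u i - d i * z i^2) = (sig^2*u i - d i*z i)^2 / d i) by (field; lra).
       assert (0 <= (sig^2*u i - d i*z i)^2 / d i) by (unfold Rdiv; apply Rmult_le_pos; [apply pow2_ge_0|apply Rlt_le, Rinv_0_lt_compat; lra]).
       lra. }
     rewrite rsum_minus in H0. unfold dot in *.
     replace (rsum n (fun i => 2 * sig ^ 2 * z i * u i)) with (2 * (sig^2 * rsum n (fun i => z i * u i))) in H0.
     lra. rewrite <- !rsum_scal. apply rsum_ext; intros; lra. }
   rewrite HQu. assert (rsum n (fun i => sig ^ 2 * lam * v i ^ 2 / (sig ^ 2 + lam * C i i ^ 2))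
      = sig ^ 2 * rsum n (fun i => u i ^ 2) - rsum n (fun i => sig ^ 4 * u i ^ 2 / d i)).
   { rewrite <- rsum_scal, <- rsum_minus. apply rsum_ext; intros i Hi.
     specialize (Hc i Hi). specialize (Hd i). unfold d, u in *. fold c in Hc |- *. unfold c in *; cbv beta in *. field. split; lra. }
   lra.
 -
   assert (0 <= sig^2 * dot n z u).
   { rewrite <- HR. assert (0 <= dot n z z) by apply nrm_nonneg.
     assert (0 <= lam * rsum n (fun i => (c i)^2 * (z i)^2)).
     { apply Rmult_le_pos; try lra. apply rsum_nonneg; intros; nra. }
     nra. }
   rewrite HQu. replace (rsum n (fun i => v i ^ 2 / C i i ^ 2)) with (rsum n (fun i => u i ^2)). lra.
   apply rsum_ext; intros i Hi. specialize (Hc i Hi). unfold u, c. field. auto.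
Qed.

Lemma quad_ext_vec n A x y : (forall i, (i < n)%nat -> x i = y i) -> quad n A x = quad n A y.
Proof. intros. unfold quad, mvec. apply rsum_ext; intros. rewrite H by auto. f_equal.
 apply rsum_ext; intros. rewrite H; auto. Qed.

Lemma quad_zero n A x : (forall i, (i < n)%nat -> x i = 0) -> quad n A x = 0.
Proof. intros. unfold quad. rewrite <- (rsum_zero n). apply rsum_ext; intros. rewrite H; auto; lra. Qed.

Lemma dot_zero n x : (forall i, (i < n)%nat -> x i = 0) -> dot n x x = 0.
Proof. intros. unfold dot. rewrite <- (rsum_zero n). apply rsum_ext; intros. rewrite H; auto; lra. Qed.

Lemma not_nonzero n x : ~ nonzero_vec n x -> forall i, (i < n)%nat -> x i = 0.
Proof. intros H i Hi. apply NNPP. intro. apply H. exists i; auto. Qed.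

Lemma rsum_nonneg_zero n f : (forall i, (i < n)%nat -> 0 <= f i) -> rsum n f = 0 ->
  forall i, (i < n)%nat -> f i = 0.
Proof. induction n; intros; [lia|]. simpl in H0.
 assert (0 <= rsum n f) by (apply rsum_nonneg; intros; apply H; lia).
 assert (0 <= f n) by (apply H; lia).
 assert (f n = 0) by lra. assert (rsum n f = 0) by lra.
 destruct (Nat.eq_dec i n). subst; auto. apply IHn; auto; try lia. Qed.

Lemma dot_zero_inv n x : dot n x x = 0 -> forall i, (i < n)%nat -> x i = 0.
Proof. intros. assert (x i * x i = 0). { apply (rsum_nonneg_zero n (fun i => x i * x i)); auto.
 intros; nra. } nra. Qed.

Lemma CS n b x : (dot n b x)^2 <= dot n b b * dot n x x.
Proof.
 assert (Hq : forall t, 0 <= dot n x x - 2 * t * dot n b x + t^2 * dot n b b).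
 { intros t. assert (0 <= dot n (fun i => x i - t * b i) (fun i => x i - t * b i)) by apply nrm_nonneg.
   replace (dot n x x - 2 * t * dot n b x + t ^ 2 * dot n b b) with
     (dot n (fun i => x i - t * b i) (fun i => x i - t * b i)); auto.
   unfold dot. rewrite <- rsum_scal, <- rsum_scal, <- rsum_minus, <- rsum_plus. apply rsum_ext; intros; ring. }
 assert (0 <= dot n b b) by apply nrm_nonneg. assert (0 <= dot n x x) by apply nrm_nonneg.
 destruct (Req_dec (dot n b b) 0) as [E|E].
 - destruct (Req_dec (dot n b x) 0) as [E2|E2]. rewrite E2, E; lra.
   specialize (Hq ((dot n x x + 1) / (2 * dot n b x))). rewrite E in Hq.
   replace (2 * ((dot n x x + 1) / (2 * dot n b x)) * dot n b x) with (dot n x x + 1) in Hq by (field; auto).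
   lra.
 - specialize (Hq (dot n b x / dot n b b)).
   replace (dot n x x - 2 * (dot n b x / dot n b b) * dot n b x + (dot n b x / dot n b b) ^ 2 * dot n b b)
     with (dot n x x - (dot n b x)^2 / dot n b b) in Hq by (field; auto).
   assert ((dot n b x)^2 / dot n b b <= dot n x x) by lra.
   assert ((dot n b x)^2 / dot n b b * dot n b b <= dot n x x * dot n b b) by (apply Rmult_le_compat_r; lra).
   replace ((dot n b x)^2 / dot n b b * dot n b b) with ((dot n b x)^2) in H2 by (field; auto). lra.
Qed.

Lemma quad_S n B x : symmetric (S n) B ->
  quad (S n) B x = quad n B x + 2 * x n * dot n (fun i => B n i) x + B n n * (x n)^2.
Proof. intros HB. unfold quad, mvec, dot. cbn [rsum].
 rewrite (rsum_ext n (fun i => x i * (rsum n (fun l => B i l * x l) + B i n * x n))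
   (fun i => x i * rsum n (fun l => B i l * x l) + x n * (B n i * x i))).
 - rewrite rsum_plus, rsum_scal. ring.
 - intros. rewrite (HB i n) by lia. unfold mtr. ring.
Qed.

Lemma quad_schur n B a x : a <> 0 ->
  quad n (fun i j => B i j - B n i * B n j / a) x = quad n B x - (dot n (fun i => B n i) x)^2 / a.
Proof. intros Ha. unfold quad, mvec, dot.
 rewrite (rsum_ext n _ (fun i => x i * rsum n (fun l => B i l * x l) -
      (B n i * x i) * rsum n (fun l => B n l * x l) / a)).
 - rewrite rsum_minus. f_equal. unfold Rdiv. rewrite rsum_scalr, rsum_scalr. ring.
 - intros. rewrite (rsum_ext n _ (fun l => B i l * x l - (B n i / a) * (B n l * x l))).
   rewrite rsum_minus, rsum_scal. field; auto. intros; field; auto.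
Qed.

Lemma unifPD n B : symmetric n B -> (forall x, nonzero_vec n x -> quad n B x > 0) ->
  exists e, e > 0 /\ forall x, quad n B x >= e * dot n x x.
Proof.
 revert B; induction n; intros B HS HP.
 - exists 1. split; [lra|]. intros. unfold quad, dot; simpl; lra.
 - set (a := B n n). set (b := fun i => B n i).
   assert (Ha : a > 0).
   { specialize (HP (fun i => if Nat.eqb i n then 1 else 0)).
     assert (nonzero_vec (S n) (fun i => if Nat.eqb i n then 1 else 0)).
     { exists n. split; [lia|]. rewrite Nat.eqb_refl. lra. }
     specialize (HP H). rewrite quad_S in HP by auto. rewrite Nat.eqb_refl in HP.
     rewrite quad_zero in HP. rewrite (dot_ext n _ _ b (fun _ => 0)) in HP. unfold dot in HP.
     rewrite (rsum_ext n _ (fun _ => 0)) in HP. rewrite rsum_zero in HP. fold a in HP. lra.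
     intros; lra. auto. intros. destruct (Nat.eqb j n) eqn:E; auto. apply Nat.eqb_eq in E; lia.
     intros. destruct (Nat.eqb i n) eqn:E; auto. apply Nat.eqb_eq in E; lia. }
   set (S' := fun i j => B i j - B n i * B n j / a).
   assert (HS' : symmetric n S').
   { intros i j Hi Hj. unfold S', mtr; cbv beta. rewrite (HS i j) by lia. change (mtr B i j) with (B j i). field. lra. }
   assert (Hdec : forall x, quad (S n) B x = quad n S' x + a * (x n + dot n b x / a)^2).
   { intros. rewrite quad_S by auto. unfold S'. rewrite quad_schur by lra. fold a b. field. lra. }
   assert (HP' : forall x, nonzero_vec n x -> quad n S' x > 0).
   { intros x [i [Hi Hx]]. set (x' := fun j => if Nat.eqb j n then - (dot n b x / a) else x j).
     assert (Hx' : forall j, (j < n)%nat -> x' j = x j).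
     { intros. unfold x'. destruct (Nat.eqb j n) eqn:E; auto. apply Nat.eqb_eq in E; lia. }
     assert (nonzero_vec (S n) x'). { exists i. split; [lia|]. rewrite Hx'; auto. }
     specialize (HP _ H). rewrite Hdec in HP.
     rewrite (quad_ext_vec n S' x' x) in HP by auto.
     rewrite (dot_ext n b x' b x) in HP by auto.
     unfold x' in HP. rewrite Nat.eqb_refl in HP.
     replace (- (dot n b x / a) + dot n b x / a) with 0 in HP by ring. lra. }
   destruct (IHn S' HS' HP') as [e' [He' Hb']].
   set (Kb := dot n b b / a^2).
   assert (HKb : 0 <= Kb). { unfold Kb. apply Rmult_le_pos. apply nrm_nonneg. apply Rlt_le, Rinv_0_lt_compat. nra. }
   exists (Rmin (a/2) (e' / (1 + 2 * Kb))). split.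
   { apply Rmin_glb_lt. lra. apply Rdiv_lt_0_compat; lra. }
   intros x. set (e := Rmin (a / 2) (e' / (1 + 2 * Kb))).
   assert (He1 : e <= a/2) by apply Rmin_l.
   assert (He2 : e * (1 + 2*Kb) <= e').
   { assert (e <= e' / (1 + 2*Kb)) by apply Rmin_r.
     apply Rmult_le_compat_r with (r := 1 + 2*Kb) in H; [|lra].
     replace (e' / (1 + 2 * Kb) * (1 + 2 * Kb)) with e' in H by (field; lra). lra. }
   assert (He0 : 0 < e). { unfold e. apply Rmin_glb_lt. lra. apply Rdiv_lt_0_compat; lra. }
   rewrite Hdec. specialize (Hb' x).
   set (s := x n + dot n b x / a). set (be := dot n b x / a).
   assert (Hbe : be^2 <= Kb * dot n x x).
   { replace (be^2) with ((dot n b x)^2 * / a^2) by (unfold be; field; lra).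
     replace (Kb * dot n x x) with ((dot n b b * dot n x x) * / a^2) by (unfold Kb; field; lra).
     apply Rmult_le_compat_r. apply Rlt_le, Rinv_0_lt_compat; nra. apply CS. }
   assert (Hxn : (x n)^2 <= 2 * s^2 + 2 * be^2).
   { replace (x n) with (s - be) by (unfold s, be; ring). pose proof (pow2_ge_0 (s+be)). nra. }
   change (dot (S n) x x) with (dot n x x + x n * x n).
   assert (0 <= dot n x x) by apply nrm_nonneg.
   nra.
Qed.

Lemma quad_lin n B x y t : symmetric n B ->
  quad n B (fun i => x i + t * y i) = quad n B x + 2 * t * dot n y (mvec n B x) + t^2 * quad n B y.
Proof. intros HB. rewrite !quad_dot.
 assert (Hm : forall i, (i < n)%nat -> mvec n B (fun i => x i + t * y i) i = mvec n B x i + t * mvec n B y i).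
 { intros. unfold mvec. rewrite <- rsum_scal, <- rsum_plus. apply rsum_ext; intros; ring. }
 assert (Hs : dot n x (mvec n B y) = dot n y (mvec n B x)).
 { rewrite dot_mvec. rewrite dot_sym. apply dot_ext; auto. intros. apply mvec_sym; auto. }
 rewrite (dot_ext n _ _ (fun i => x i + t * y i) (fun i => mvec n B x i + t * mvec n B y i)); auto.
 unfold dot in *. rewrite <- !rsum_scal, <- !rsum_plus.
 rewrite (rsum_ext n _ (fun i => (x i * mvec n B x i + t * (x i * mvec n B y i)) + (t * (y i * mvec n B x i) + t^2 * (y i * mvec n B y i)))).
 rewrite !rsum_plus, !rsum_scal. rewrite Hs. ring.
 intros; ring.
Qed.

Lemma psd_kernel n B x : symmetric n B -> (forall y, quad n B y >= 0) -> quad n B x = 0 ->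
  forall i, (i < n)%nat -> mvec n B x i = 0.
Proof. intros HB Hp Hx. set (y := mvec n B x). apply dot_zero_inv.
 set (q := quad n B y). set (yy := dot n y y).
 assert (Hq : q >= 0) by apply Hp. assert (0 <= yy) by apply nrm_nonneg.
 destruct (Req_dec yy 0); auto. exfalso.
 set (t := - yy / (q + 1)).
 specialize (Hp (fun i => x i + t * y i)). rewrite quad_lin in Hp by auto. rewrite Hx in Hp.
 fold y yy q in Hp.
 assert (2 * t * yy + t^2 * q < 0).
 { unfold t. replace (2 * (- yy / (q + 1)) * yy + (- yy / (q + 1))^2 * q) with
     (- yy^2 * (q + 2) / (q+1)^2) by (field; lra).
   unfold Rdiv. apply Rmult_neg_pos. assert (0 < yy^2) by nra. nra.
   apply Rinv_0_lt_compat. nra. }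
 lra.
Qed.

Lemma quad_scalmid n c x : quad n (mscal c mid) x = c * dot n x x.
Proof. unfold quad, dot. rewrite <- rsum_scal. apply rsum_ext; intros. rewrite mvec_scalmid; auto. ring. Qed.

Lemma min_eig_bound n W lam : posdef n W -> (0 < n)%nat -> is_min_eigenvalue n W lam ->
  forall x, quad n W x >= lam * dot n x x.
Proof.
 intros [HWs HWp] Hn [_ Hmin].
 assert (Hnn : forall x, quad n W x >= 0).
 { intros x. destruct (classic (nonzero_vec n x)). specialize (HWp x H); lra.
   rewrite quad_zero. lra. apply not_nonzero; auto. }
 set (E := fun t => forall x, quad n W x >= t * dot n x x).
 set (e0 := fun i => if Nat.eqb i 0 then 1 else 0).
 assert (Hb : bound E).
 { exists (quad n W e0). intros t Ht. specialize (Ht e0).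
   assert (dot n e0 e0 = 1).
   { unfold dot, e0. rewrite (rsum_ext n _ (fun i => if Nat.eqb i 0 then 1 else 0)).
     apply rsum_delta; auto. intros. destruct (Nat.eqb i 0); lra. }
   rewrite H in Ht. lra. }
 assert (He : exists t, E t). { exists 0. intros x. specialize (Hnn x). lra. }
 destruct (completeness E Hb He) as [mu [Hub Hlub]].
 assert (HmuE : E mu).
 { intros x. apply Rnot_lt_ge. intro Hlt.
   assert (0 <= dot n x x) by apply nrm_nonneg.
   destruct (Req_dec (dot n x x) 0) as [E0|E0].
   { specialize (Hnn x). rewrite E0 in Hlt. lra. }
   set (r := quad n W x / dot n x x).
   assert (Hr : r < mu). { unfold r. apply Rmult_lt_reg_r with (dot n x x). lra.
     unfold Rdiv. rewrite Rmult_assoc, Rinv_l by auto. lra. }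
   assert (~ is_upper_bound E r). { intro. specialize (Hlub r H0). lra. }
   apply not_all_ex_not in H0. destruct H0 as [t Ht].
   apply imply_to_and in Ht. destruct Ht as [Ht1 Ht2]. apply Rnot_le_gt in Ht2.
   specialize (Ht1 x). assert (quad n W x = r * dot n x x) by (unfold r; field; auto).
   assert (t * dot n x x > r * dot n x x) by (apply Rmult_gt_compat_r; lra). lra. }
 set (B := msub W (mscal mu mid)).
 assert (HBq : forall x, quad n B x = quad n W x - mu * dot n x x).
 { intros. unfold B. rewrite quad_msub, quad_scalmid. auto. }
 assert (HBs : symmetric n B).
 { intros i j Hi Hj. unfold B, msub, mscal, mtr, mid. rewrite (HWs i j) by auto. unfold mtr.
   rewrite Nat.eqb_sym. auto. }
 assert (HBp : forall y, quad n B y >= 0). { intros. rewrite HBq. specialize (HmuE y). lra. }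
 assert (Hex : exists x, nonzero_vec n x /\ quad n B x = 0).
 { apply NNPP. intro Hno.
   assert (HPD : forall x, nonzero_vec n x -> quad n B x > 0).
   { intros x Hx. specialize (HBp x). destruct (Req_dec (quad n B x) 0). exfalso; apply Hno; eauto. lra. }
   destruct (unifPD n B HBs HPD) as [e [He0 He1]].
   assert (E (mu + e)). { intros x. specialize (He1 x). rewrite HBq in He1. lra. }
   specialize (Hub _ H). lra. }
 destruct Hex as [x [Hx Hq]].
 assert (Heig : is_eigenvalue n W mu).
 { exists x. split; auto. intros i Hi. pose proof (psd_kernel n B x HBs HBp Hq i Hi).
   unfold B in H. unfold mvec, msub in H. rewrite (rsum_ext n _ (fun l => W i l * x l - mscal mu mid i l * x l)) in H.
   rewrite rsum_minus in H. fold (mvec n W x i) in H. fold (mvec n (mscal mu mid) x i) in H.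
   rewrite mvec_scalmid in H by auto. lra. intros; ring. }
 specialize (Hmin mu Heig). intros y. specialize (HmuE y). assert (0 <= dot n y y) by apply nrm_nonneg.
 nra.
Qed.

Lemma alg_up eps K eta : eps > 0 -> 1 <= K <= 9/2 -> eta > 0 ->
  / 8 * ((1 + sqrt (36 * eta + 1)) / eta) ^ 2 <= eps ->
  (K + sqrt (K^2 + 2 * eps)) / (2 * eps) <= eta.
Proof. intros He HK Ht H.
 set (s := sqrt (36 * eta + 1)).
 assert (Hs : s * s = 36 * eta + 1) by (apply sqrt_sqrt; lra).
 assert (Hs0 : 0 <= s) by apply sqrt_pos.
 assert (Hs1 : 1 <= s) by nra.
 fold s in H.
 assert (H1 : (1 + s)^2 <= 8 * eps * eta^2).
 { replace ((1 + s) ^ 2) with (((1 + s) / eta) ^ 2 * eta^2) by (field; lra).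
   assert (0 < eta^2) by nra. assert (((1+s)/eta)^2 = 8 * (/8 * ((1+s)/eta)^2)) by (field; lra).
   assert (((1+s)/eta)^2 <= 8*eps) by lra.
   apply Rmult_le_compat_r with (r := eta^2) in H2; lra. }
 assert (Hsq : (1+s)^2 = 2 + 36*eta + 2*s) by (simpl; rewrite Rmult_1_r; nra).
 assert (H2 : 2 * eps * eta^2 >= 1 + 9 * eta) by lra.
 assert (H3 : 2 * eps * eta ^ 2 >= 1 + 2 * K * eta) by nra.
 assert (H4 : 2 * eps * eta - K > 0).
 { assert (2 * eps * eta ^ 2 - K * eta > 0) by nra.
   assert ((2 * eps * eta - K) * eta > 0) by nra. nra. }
 assert (H5 : sqrt (K^2 + 2 * eps) <= 2 * eps * eta - K).
 { rewrite <- (sqrt_pow2 (2 * eps * eta - K)) by lra. apply sqrt_le_1_alt.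
   assert (2 * eps * (2 * eps * eta ^ 2 - 2 * K * eta - 1) >= 0) by nra. nra. }
 apply Rmult_le_reg_r with (2 * eps). lra. unfold Rdiv. rewrite Rmult_assoc, Rinv_l by lra. lra.
Qed.

Lemma alg_low eps K eta : eps > 0 -> 1 <= K -> eta > 0 -> eps <= / eta ->
  eta <= (K + sqrt (K^2 + 2 * eps)) / (2 * eps).
Proof. intros He HK Ht H.
 assert (sqrt (K^2 + 2*eps) >= K).
 { rewrite <- (sqrt_pow2 K) at 2 by lra. apply Rle_ge, sqrt_le_1_alt. lra. }
 assert (eps * eta <= 1).
 { apply Rmult_le_compat_r with (r := eta) in H; [|lra]. rewrite Rinv_l in H by lra. lra. }
 apply Rmult_le_reg_r with (2 * eps). lra. unfold Rdiv. rewrite Rmult_assoc, Rinv_l by lra. lra.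
Qed.

Lemma up_term s x a b : 0 < a -> a <= b -> s^2 * (x^2 / b) <= s^2 / a * (x * x).
Proof. intros Ha Hb. assert (/ b <= / a) by (apply Rinv_le_contravar; lra).
 assert (0 <= s^2) by apply pow2_ge_0. assert (0 <= x*x) by nra.
 unfold Rdiv. replace (s^2 * (x^2 * / b)) with ((s^2 * (x*x)) * / b) by ring.
 replace (s^2 * / a * (x*x)) with ((s^2 * (x*x)) * / a) by ring.
 apply Rmult_le_compat_l; nra. Qed.

Lemma lo_term s lam x a b : lam > 0 -> 0 <= a <= b -> s > 0 ->
  s^2 * lam / (s^2 + lam * b) * (x * x) <= s^2 * lam * x^2 / (s^2 + lam * a).
Proof. intros Hl Hab Hs. assert (0 < s^2) by (simpl; nra).
 assert (/ (s^2 + lam*b) <= / (s^2 + lam * a)) by (apply Rinv_le_contravar; nra).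
 assert (0 <= s^2 * lam * (x*x)) by (apply Rmult_le_pos; [apply Rmult_le_pos; lra | nra]).
 unfold Rdiv. replace (s^2 * lam * / (s^2 + lam * b) * (x*x)) with ((s^2 * lam * (x*x)) * / (s^2 + lam * b)) by ring.
 replace (s^2 * lam * x^2 * / (s^2 + lam * a)) with ((s^2 * lam * (x*x)) * / (s^2 + lam * a)) by ring.
 apply Rmult_le_compat_l; auto. Qed.

From Coquelicot Require Import Coquelicot.
Open Scope R_scope.

Definition gf (z : R) := exp (- (z ^ 2) / 2).

Lemma gf_cont x : continuous gf x.
Proof. apply (ex_derive_continuous (K := R_AbsRing) (V := R_NormedModule)). unfold gf. auto_derive. auto. Qed.

Lemma gf_RInt a b : ex_RInt gf a b.
Proof. apply (ex_RInt_continuous (V := R_CompleteNormedModule)). intros; apply gf_cont. Qed.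

Lemma gf_pos z : 0 < gf z.
Proof. apply exp_pos. Qed.

Lemma exp_INR k x : exp (INR k * x) = exp x ^ k.
Proof. induction k. simpl. rewrite Rmult_0_l, exp_0. auto.
 rewrite S_INR, Rmult_plus_distr_r, exp_plus, IHk, Rmult_1_l. simpl. ring. Qed.

Lemma exp10 : 13000 <= exp 10.
Proof. replace 10 with (INR 100 * (1/10)) by (simpl; lra). rewrite exp_INR.
 assert (1 + 1/10 < exp (1/10)) by (apply exp_ineq1; lra).
 apply Rle_trans with ((11/10)^100). cbn [pow]; lra. apply pow_incr. lra. Qed.

Lemma sqrt2pi_ub : sqrt (2 * PI) <= 2.8285.
Proof. pose proof PI_4. rewrite <- (sqrt_pow2 2.8285) by lra. apply sqrt_le_1_alt. simpl. lra. Qed.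

Lemma sqrt2pi_lb : 2.449 <= sqrt (2 * PI).
Proof. pose proof PI2_3_2. rewrite <- (sqrt_pow2 2.449) by lra. apply sqrt_le_1_alt. simpl. lra. Qed.

Lemma exp_half : exp (-1/2) >= 0.577.
Proof. assert (exp (1/2) * exp (1/2) = exp 1) by (rewrite <- exp_plus; f_equal; lra).
 pose proof exp_le_3. pose proof (exp_pos (1/2)).
 assert (exp (1/2) <= 1.733) by nra.
 replace (-1/2) with (- (1/2)) by lra. rewrite exp_Ropp.
 apply Rle_ge. apply Rmult_le_reg_r with (exp (1/2)); auto. rewrite Rinv_l by lra. nra. Qed.

Lemma tail_lower K T : K <= 1 -> 1 <= T -> RInt gf K T >= exp (-1/2) / 2 - 1 / T.
Proof. intros HK HT.
 set (F := fun z => z * exp (- (z ^ 2) / 2) / (1 + z^2)).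
 set (g := fun z => exp (- (z ^ 2) / 2) * (z^4 + 2 * z^2 - 1) / (1 + z^2)^2).
 assert (Hd : forall z, is_derive (fun z => - F z) z (g z)).
 { intros z. unfold F, g. auto_derive. nra. replace (exp (- (z * (z * 1)) * / 2)) with (exp (- z ^ 2 / 2)) by (f_equal; field). field. nra. }
 assert (Hgc : forall z, continuous g z).
 { intros. apply (ex_derive_continuous (K := R_AbsRing) (V := R_NormedModule)). unfold g. auto_derive. nra. }
 assert (HI : is_RInt g 1 T (minus (- F T) (- F 1))).
 { apply (is_RInt_derive (V := R_CompleteNormedModule) (fun z => - F z) g); intros; auto. }
 assert (Hg : RInt g 1 T = F 1 - F T). { apply (is_RInt_unique (V := R_CompleteNormedModule)) in HI. rewrite HI. unfold minus, plus, opp; simpl. ring. }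
 assert (Hle : RInt g 1 T <= RInt gf 1 T).
 { apply RInt_le; auto. eexists; eauto. apply gf_RInt.
   intros z Hz. unfold g, gf. unfold Rdiv. rewrite Rmult_assoc.
   rewrite <- (Rmult_1_r (exp (- z ^ 2 * / 2))) at 2.
   apply Rmult_le_compat_l. apply Rlt_le, exp_pos.
   assert (0 < (1+z^2)^2) by nra.
   apply Rmult_le_reg_r with ((1 + z^2)^2); auto. rewrite Rmult_assoc, Rinv_l by lra. nra. }
 assert (H0 : 0 <= RInt gf K 1).
 { apply RInt_ge_0; auto. apply gf_RInt. intros; apply Rlt_le, gf_pos. }
 assert (Hch : RInt gf K T = RInt gf K 1 + RInt gf 1 T).
 { symmetry. apply (RInt_Chasles gf K 1 T); apply gf_RInt. }
 assert (HF1 : F 1 = exp (-1/2) / 2).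
 { unfold F. replace (- 1 ^ 2 / 2) with (-1/2) by (simpl; field). simpl; field. }
 assert (HFT : F T <= 1 / T).
 { unfold F. assert (exp (- T^2/2) <= 1).
   { rewrite <- exp_0. apply Rlt_le, exp_increasing. nra. }
   pose proof (exp_pos (- T^2/2)).
   apply Rle_trans with (T/(1+T^2)).
   { unfold Rdiv. apply Rmult_le_compat_r. apply Rlt_le, Rinv_0_lt_compat; nra. nra. }
   assert (1/T - T/(1+T^2) = 1/(T*(1+T^2))) by (field; split; nra).
   assert (0 <= 1/(T*(1+T^2))). { unfold Rdiv. rewrite Rmult_1_l. apply Rlt_le, Rinv_0_lt_compat; nra. }
   lra. }
 lra.
Qed.

Lemma tail_upper K T : 9/2 <= K -> K <= T -> RInt gf K T <= exp (- K^2/2) / K.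
Proof. intros HK HT.
 set (G := fun z => - exp (- (z ^ 2) / 2) / K).
 set (h := fun z => z * exp (- (z ^ 2) / 2) / K).
 assert (Hd : forall z, is_derive G z (h z)).
 { intros z. unfold G, h. auto_derive. lra.
   replace (exp (- (z * (z * 1)) * / 2)) with (exp (- z ^ 2 / 2)) by (f_equal; field). field. lra. }
 assert (Hgc : forall z, continuous h z).
 { intros. apply (ex_derive_continuous (K := R_AbsRing) (V := R_NormedModule)). unfold h. auto_derive. lra. }
 assert (HI : is_RInt h K T (minus (G T) (G K))).
 { apply (is_RInt_derive (V := R_CompleteNormedModule) G h); intros; auto. }
 apply (is_RInt_unique (V := R_CompleteNormedModule)) in HI.
 assert (Hh : RInt h K T = (exp (- K^2/2) - exp (- T^2/2)) / K).
 { rewrite HI. unfold minus, plus, opp, G; simpl. field. lra. }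
 assert (Hle : RInt gf K T <= RInt h K T).
 { apply RInt_le; auto. apply gf_RInt. eexists. apply (is_RInt_derive (V := R_CompleteNormedModule) G h); intros; auto.
   intros z Hz. unfold h, gf. unfold Rdiv. rewrite (Rmult_comm z), Rmult_assoc.
   rewrite <- (Rmult_1_r (exp (- z ^ 2 * / 2))) at 1.
   apply Rmult_le_compat_l. apply Rlt_le, exp_pos.
   apply Rmult_le_reg_r with K. lra. rewrite Rmult_assoc, Rinv_l by lra. lra. }
 pose proof (exp_pos (- T^2/2)).
 assert ((exp (- K ^ 2 / 2) - exp (- T ^ 2 / 2)) / K <= exp (- K ^ 2 / 2) / K).
 { unfold Rdiv. apply Rmult_le_compat_r. apply Rlt_le, Rinv_0_lt_compat; lra. lra. }
 lra.
Qed.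

Lemma Kd_bounds K d : gauss_tail K d -> 1/100000 <= d <= 1/10 -> 1 <= K <= 9/2.
Proof. intros Hg Hd. pose proof sqrt2pi_ub. pose proof sqrt2pi_lb. split.
 - apply Rnot_lt_le. intro HK.
   destruct (Hg (1/1000)) as [T0 HT0]; [lra|].
   set (T := Rmax T0 1000).
   assert (T0 <= T) by apply Rmax_l. assert (1000 <= T) by apply Rmax_r.
   destruct (HT0 T) as [pr Hpr]; auto; try lra.
   rewrite <- RInt_Reals in Hpr. fold gf in Hpr.
   pose proof (tail_lower K T) as Hl. assert (RInt gf K T >= exp (-1/2)/2 - 1/T) by (apply Hl; lra).
   pose proof exp_half.
   assert (1/T <= 1/1000). { unfold Rdiv. rewrite !Rmult_1_l. apply Rinv_le_contravar; lra. }
   apply Rabs_def2 in Hpr. destruct Hpr as [Hp1 Hp2].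
   assert (RInt gf K T / sqrt (2 * PI) >= (0.577/2 - 1/1000) / 2.8285).
   { unfold Rdiv. apply Rle_ge. apply Rmult_le_compat; [lra | apply Rlt_le, Rinv_0_lt_compat; lra | lra | apply Rinv_le_contravar; lra]. }
   lra.
 - apply Rnot_lt_le. intro HK.
   destruct (Hg (1/1000000)) as [T0 HT0]; [lra|].
   set (T := Rmax T0 K).
   assert (T0 <= T) by apply Rmax_l. assert (K <= T) by apply Rmax_r.
   destruct (HT0 T) as [pr Hpr]; auto; try lra.
   rewrite <- RInt_Reals in Hpr. fold gf in Hpr.
   assert (RInt gf K T <= exp (- K^2/2) / K) by (apply tail_upper; lra).
   assert (exp (- K^2/2) <= 1/13000).
   { apply Rle_trans with (exp (Ropp 10)). apply Rlt_le, exp_increasing. nra.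
     rewrite exp_Ropp. pose proof exp10. unfold Rdiv. rewrite Rmult_1_l. apply Rinv_le_contravar; lra. }
   assert (exp (- K^2/2) / K <= 1/13000 / (9/2)).
   { unfold Rdiv. pose proof (exp_pos (- K^2/2)). apply Rmult_le_compat; [lra | apply Rlt_le, Rinv_0_lt_compat; lra | lra | apply Rinv_le_contravar; lra]. }
   apply Rabs_def2 in Hpr. destruct Hpr as [Hp1 Hp2].
   assert (0 <= RInt gf K T). { apply RInt_ge_0; try lra. apply gf_RInt. intros; apply Rlt_le, gf_pos. }
   assert (RInt gf K T / sqrt (2 * PI) <= (1/13000/(9/2)) / 2.449).
   { unfold Rdiv. apply Rmult_le_compat; [lra | apply Rlt_le, Rinv_0_lt_compat; lra | lra | apply Rinv_le_contravar; lra]. }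
   lra.
Qed.

Theorem theorem5
  (n : nat) (H W C : mat) (m : nat) (D : mat)
  (HW : posdef n W)
  (HWD : meq n n W (mmul m D (mtr D)))
  (HC : diag_nonsingular n C)
  (Hobs : observable n n H C)
  (Hctr : controllable n m H D)
  (Delta : R) (HDelta : Delta > 0)
  (delta : R) (Hdelta : 1/100000 <= delta <= 1/10)
  (eps : R) (Heps : eps > 0)
  (Kd : R) (HKd : gauss_tail Kd delta)   (* Kd = Q^{-1}(delta) *)
  (sigma : R)
  (Hsigma : sigma = Delta / (2 * eps) * (Kd + sqrt (Kd ^ 2 + 2 * eps)))
  (Sigma : mat)
  (HSpsd : possemidef n Sigma)
  (HSric : riccati n H C (mscal (sigma ^ 2) mid) W Sigma)
  (HSuniq : forall S, possemidef n S -> riccati n H C (mscal (sigma ^ 2) mid) W S ->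
              meq n n S Sigma)
  (lamW : R) (HlamW : is_min_eigenvalue n W lamW)
  (l u : nat) (Hl : (l < n)%nat) (Hu : (u < n)%nat)
  (Hlmin : forall i, (i < n)%nat -> (C l l) ^ 2 <= (C i i) ^ 2)
  (Humax : forall i, (i < n)%nat -> (C i i) ^ 2 <= (C u u) ^ 2)
  (Bl Bu : R)
  (HBl : trace n W < Bl < trace n W + trace n (mmul n (mtr H) H) * lamW)
  (HBu : Bu > trace n W) :
  let trHH := trace n (mmul n (mtr H) H) in
  let eta1 := sqrt ((Bl - trace n W) * lamW * (C u u) ^ 2 /
                    (Delta ^ 2 * (trHH * lamW - Bl + trace n W))) in
  let eta3 := sqrt ((Bu - trace n W) * (C l l) ^ 2 / (Delta ^ 2 * trHH)) in
  (/ 8 * ((1 + sqrt (36 * eta3 + 1)) / eta3) ^ 2 <= eps -> trace n Sigma <= Bu) /\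
  (eps <= / eta1 -> Bl <= trace n Sigma).
Proof.
 intros trHH eta1 eta3.
 destruct HSpsd as [HSs HSp].
 unfold riccati in HSric. cbv zeta in HSric. destruct HSric as [Minv [HM1 [HM2 Heq]]].
 destruct (Kd_bounds Kd delta HKd Hdelta) as [HK1 HK2].
 pose proof (sqrt_pos (Kd ^ 2 + 2 * eps)) as Hsq.
 set (F := (Kd + sqrt (Kd ^ 2 + 2 * eps)) / (2 * eps)).
 assert (HsF : sigma = Delta * F) by (rewrite Hsigma; unfold F; field; lra).
 assert (HF : F > 0). { unfold F. apply Rdiv_lt_0_compat; lra. }
 assert (Hsig : sigma > 0) by (rewrite HsF; apply Rmult_lt_0_compat; lra).
 assert (Hn : (0 < n)%nat) by lia.
 set (Qf := fun v => quad n Sigma v - dot n (mvec n C (mvec n Sigma v)) (mvec n Minv (mvec n C (mvec n Sigma v)))).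
 assert (Hdec : forall x, quad n Sigma x = Qf (mvec n (mtr H) x) + quad n W x).
 { intros x. rewrite (quad_ext n _ _ x Heq). rewrite quad_madd, quad_msub, quad_HSH, quad_big by auto.
   unfold Qf. ring. }
 assert (HQb : forall lam v, lam >= 0 -> (forall x, quad n Sigma x >= lam * dot n x x) ->
   rsum n (fun i => sigma^2 * lam * (v i)^2 / (sigma^2 + lam * (C i i)^2)) <= Qf v /\
   Qf v <= sigma^2 * rsum n (fun i => (v i)^2 / (C i i)^2)).
 { intros lam v Hlam Hl'. apply (Qbound n Sigma C Minv sigma lam v); auto. }
 assert (HQ0 : forall v, Qf v >= 0).
 { intros v. destruct (HQb 0 v) as [H1 _]. lra. intros; specialize (HSp x); lra.
   rewrite (rsum_ext n _ (fun _ => 0)) in H1. rewrite rsum_zero in H1. lra.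
   intros. unfold Rdiv. ring. }
 assert (Hlam : lamW > 0).
 { destruct HlamW as [[x [Hx Hex]] _]. destruct HW as [_ HWp]. specialize (HWp x Hx).
   rewrite quad_dot in HWp. rewrite (dot_ext n x _ x (fun i => lamW * x i)) in HWp; auto.
   unfold dot in HWp. rewrite (rsum_ext n _ (fun i => lamW * (x i * x i))) in HWp.
   rewrite rsum_scal in HWp. fold (dot n x x) in HWp. pose proof (nrm_nonneg n x).
   destruct (Rle_lt_dec lamW 0); auto. nra. intros; ring. }
 pose proof (min_eig_bound n W lamW HW Hn HlamW) as HWl.
 assert (HSl : forall x, quad n Sigma x >= lamW * dot n x x).
 { intros x. rewrite Hdec. specialize (HQ0 (mvec n (mtr H) x)). specialize (HWl x). lra. }
 set (e := fun k i => if Nat.eqb i k then 1 else 0).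
 set (h := fun k => mvec n (mtr H) (e k)).
 assert (Htr : trace n Sigma = rsum n (fun k => Qf (h k)) + trace n W).
 { rewrite !trace_quad. rewrite <- rsum_plus. apply rsum_ext; intros. rewrite Hdec. auto. }
 assert (Hh : forall k j, (k < n)%nat -> h k j = H k j).
 { intros k j Hk. unfold h, mvec, mtr, e.
   rewrite (rsum_ext n _ (fun i => if Nat.eqb i k then H i j else 0)). apply (rsum_delta n k (fun i => H i j)); auto.
   intros. destruct (Nat.eqb i k); ring. }
 assert (HtrHH : trHH = rsum n (fun k => dot n (h k) (h k))).
 { unfold trHH, trace, mmul, mtr, dot. rewrite rsum_swap. apply rsum_ext; intros.
   apply rsum_ext; intros. rewrite Hh by auto. auto. }
 assert (HtrHH0 : 0 <= trHH). { rewrite HtrHH. apply rsum_nonneg; intros; apply nrm_nonneg. }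
 assert (HCl : C l l <> 0) by (apply HC; auto).
 assert (HCl2 : 0 < (C l l)^2) by (simpl; nra).
 split.
 - intros Hcond.
   assert (Hup : trace n Sigma <= trace n W + sigma^2 / (C l l)^2 * trHH).
   { rewrite Htr, HtrHH. assert (rsum n (fun k => Qf (h k)) <= sigma^2 / (C l l)^2 * rsum n (fun k => dot n (h k) (h k))).
     { rewrite <- rsum_scal. apply rsum_le; intros k Hk. destruct (HQb 0 (h k)) as [_ H2]. lra.
       intros; specialize (HSp x); lra. eapply Rle_trans. apply H2.
       rewrite <- rsum_scal. unfold dot. rewrite <- rsum_scal. apply rsum_le; intros j Hj.
       apply up_term; auto. }
     lra. }
   destruct (Req_dec trHH 0) as [E0|E0].
   { rewrite E0 in Hup. lra. }
   assert (HX : (Bu - trace n W) * (C l l) ^ 2 / (Delta ^ 2 * trHH) > 0).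
   { apply Rdiv_lt_0_compat. nra. assert (0 < Delta^2) by nra. nra. }
   assert (Heta : eta3 > 0) by (apply sqrt_lt_R0; lra).
   assert (Heta2 : eta3 * eta3 = (Bu - trace n W) * (C l l) ^ 2 / (Delta ^ 2 * trHH)) by (apply sqrt_sqrt; lra).
   pose proof (alg_up eps Kd eta3 Heps (conj HK1 HK2) Heta Hcond) as HA. fold F in HA.
   assert (sigma <= Delta * eta3) by (rewrite HsF; apply Rmult_le_compat_l; lra).
   assert (Hss : sigma^2 <= Delta^2 * (eta3 * eta3)) by nra.
   rewrite Heta2 in Hss.
   assert (sigma^2 / (C l l)^2 * trHH <= Bu - trace n W).
   { replace (Bu - trace n W) with (Delta^2 * ((Bu - trace n W) * (C l l) ^ 2 / (Delta ^ 2 * trHH)) / (C l l)^2 * trHH)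
       by (field; repeat split; nra).
     apply Rmult_le_compat_r. lra. unfold Rdiv. apply Rmult_le_compat_r. apply Rlt_le, Rinv_0_lt_compat; lra.
     lra. }
   lra.
 - intros Hcond.
   set (c := sigma^2 * lamW / (sigma^2 + lamW * (C u u)^2)).
   assert (HCu : C u u <> 0) by (apply HC; auto).
   assert (HCu2 : 0 < (C u u)^2) by nra.
   assert (Hlo : trace n W + c * trHH <= trace n Sigma).
   { rewrite Htr, HtrHH. assert (c * rsum n (fun k => dot n (h k) (h k)) <= rsum n (fun k => Qf (h k))).
     { rewrite <- rsum_scal. apply rsum_le; intros k Hk. destruct (HQb lamW (h k)) as [H1 _]. lra. auto.
       eapply Rle_trans; [|apply H1].
       unfold dot. rewrite <- rsum_scal. apply rsum_le; intros j Hj.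
       apply lo_term; auto. split. apply pow2_ge_0. auto. }
     lra. }
   assert (HD : trHH * lamW - Bl + trace n W > 0) by (unfold trHH; lra).
   assert (HY : (Bl - trace n W) * lamW * (C u u) ^ 2 / (Delta ^ 2 * (trHH * lamW - Bl + trace n W)) > 0).
   { apply Rdiv_lt_0_compat. assert (0 < Bl - trace n W) by lra. assert (0 < (Bl - trace n W) * lamW) by nra. nra.
     assert (0 < Delta^2) by nra. nra. }
   assert (Heta : eta1 > 0) by (apply sqrt_lt_R0; lra).
   assert (Heta2 : eta1 * eta1 = (Bl - trace n W) * lamW * (C u u) ^ 2 / (Delta ^ 2 * (trHH * lamW - Bl + trace n W))) by (apply sqrt_sqrt; lra).
   pose proof (alg_low eps Kd eta1 Heps HK1 Heta Hcond) as HA. fold F in HA.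
   assert (Delta * eta1 <= sigma) by (rewrite HsF; apply Rmult_le_compat_l; lra).
   assert (Hss : Delta^2 * (eta1 * eta1) <= sigma^2) by (assert (0 < Delta*eta1) by nra; simpl; rewrite !Rmult_1_r; nra).
   rewrite Heta2 in Hss.
   set (Dd := trHH * lamW - Bl + trace n W) in *.
   assert (Hs2 : (Bl - trace n W) * lamW * (C u u)^2 <= sigma^2 * Dd).
   { replace ((Bl - trace n W) * lamW * (C u u)^2) with (Delta^2 * ((Bl - trace n W) * lamW * (C u u) ^ 2 / (Delta ^ 2 * Dd)) * Dd)
       by (field; split; nra). apply Rmult_le_compat_r; lra. }
   assert (Bl - trace n W <= c * trHH).
   { unfold c. assert (0 < sigma^2 + lamW * (C u u)^2) by nra.
     apply Rmult_le_reg_r with (sigma^2 + lamW * (C u u)^2); auto.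
     replace (sigma ^ 2 * lamW / (sigma ^ 2 + lamW * C u u ^ 2) * trHH * (sigma ^ 2 + lamW * C u u ^ 2))
       with (sigma^2 * lamW * trHH) by (field; lra).
     unfold Dd in Hs2. nra. }
   lra.
Qed.
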